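(* For any deterministic automata $G=(X,\Sigma,\longrightarrow,X_0)$ and $R=(Z,\Sigma,\longrightarrow,Z_0)$, there exists a $\Sigma_{uc}$-admissible supervisor $S$ with $S\|G\sqsubseteq_{cc}R$ if and only if $G\sqsubseteq_{ucr}R$.
   Context: An automaton is a 4-tuple $A=(Q,\Sigma,\longrightarrow,Q_0)$ with state set $Q$, finite event set $\Sigma$, ${\longrightarrow}\subseteq Q\times\Sigma\times Q$ and $\emptyset\neq Q_0\subseteq Q$; write $q\xrightarrow{\sigma}q'$ for $(q,\sigma,q')\in{\longrightarrow}$, $q\xrightarrow{\sigma}$ if some such $q'$ exists, extended to strings. It is deterministic if $|Q_0|=1$ and each state has at most one $\sigma$-successor for each $\sigma$. A state is reachable if reached from an initial state by some string. Events are partitioned into uncontrollable $\Sigma_{uc}$ and controllable $\Sigma_c$; $\Sigma_r\subseteq\Sigma$ is a fixed set of required events. For a supervisor (automaton) $S=(Y,\Sigma,\longrightarrow,Y_0)$, $S\|G=(Y\times X,\Sigma,\longrightarrow,Y_0\times X_0)$ with $(y,x)\xrightarrow{\sigma}(y',x')$ iff $y\xrightarrow{\sigma}y'$ and $x\xrightarrow{\sigma}x'$; $S$ is $\Sigma_{uc}$-admissible w.r.t. $G$ if for every reachable $(y,x)$ of $S\|G$ and $\sigma\in\Sigma_{uc}$, $x\xrightarrow{\sigma}$ implies $(y,x)\xrightarrow{\sigma}$. For automata $A_1,A_2$ with state sets $Q_1,Q_2$, initial sets $Q_{01},Q_{02}$, and $\Phi\subseteq Q_1\times Q_2$, consider: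 (initial state) every $q_0\in Q_{01}$ has $p_0\in Q_{02}$ with $(q_0,p_0)\in\Phi$; ($\Sigma'$-forward) for $(q,p)\in\Phi$, $\sigma\in\Sigma'$, $q\xrightarrow{\sigma}q'$ there is $p'$ with $p\xrightarrow{\sigma}p'$, $(q',p')\in\Phi$; ($\Sigma_r$-backward) for $(q,p)\in\Phi$, $\sigma\in\Sigma_r$, $p\xrightarrow{\sigma}p'$ there is $q'$ with $q\xrightarrow{\sigma}q'$, $(q',p')\in\Phi$. $\Phi$ is a cc-simulation if it satisfies (initial state), ($\Sigma$-forward) and ($\Sigma_r$-backward), and a $\Sigma_{ucr}$-simulation if it satisfies (initial state), ($\Sigma_{uc}$-forward) and ($\Sigma_r$-backward). $A_1\sqsubseteq_{cc}A_2$ (resp. $A_1\sqsubseteq_{ucr}A_2$) means such a relation exists. *)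

(* Defs.v *)
From mathcomp Require Import all_boot.
Set Implicit Arguments.
Unset Strict Implicit.
Unset Printing Implicit Defensive.

Record automaton (E : finType) (Q : Type) := Automaton {
  trans : Q -> E -> Q -> Prop;
  init : Q -> Prop;
  init_nonempty : exists q, init q
}.

Section Defs.
Variable E : finType.

Definition deterministic (Q : Type) (A : automaton E Q) : Prop :=
  (exists q0, init A q0 /\ forall q, init A q -> q = q0) /\
  (forall q s q1 q2, trans A q s q1 -> trans A q s q2 -> q1 = q2).

Inductive trans_str (Q : Type) (A : automaton E Q) : Q -> seq E -> Q -> Prop :=
| trans_str_nil q : trans_str A q [::] q
| trans_str_cons q s q' w q'' :
    trans A q s q' -> trans_str A q' w q'' -> trans_str A q (s :: w) q''.

Definition reachable (Q : Type) (A : automaton E Q) (q : Q) : Prop :=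
  exists q0 w, init A q0 /\ trans_str A q0 w q.

Lemma sync_init_nonempty (Y X : Type) (S : automaton E Y) (G : automaton E X) :
  exists p : Y * X, init S p.1 /\ init G p.2.
Proof.
case: (init_nonempty S) => y Hy; case: (init_nonempty G) => x Hx.
by exists (y, x).
Qed.

Definition sync (Y X : Type) (S : automaton E Y) (G : automaton E X)
  : automaton E (Y * X) :=
  @Automaton E (Y * X)
    (fun p s p' => trans S p.1 s p'.1 /\ trans G p.2 s p'.2)
    (fun p => init S p.1 /\ init G p.2)
    (sync_init_nonempty S G).

Definition admissible (uc : pred E) (Y X : Type)
  (S : automaton E Y) (G : automaton E X) : Prop :=
  forall y x, reachable (sync S G) (y, x) ->
  forall s, uc s -> (exists x', trans G x s x') ->
  exists p', trans (sync S G) (y, x) s p'.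

Definition init_cond (Q1 Q2 : Type) (A1 : automaton E Q1) (A2 : automaton E Q2)
  (Phi : Q1 -> Q2 -> Prop) : Prop :=
  forall q0, init A1 q0 -> exists p0, init A2 p0 /\ Phi q0 p0.

Definition forward_cond (Sig : pred E) (Q1 Q2 : Type)
  (A1 : automaton E Q1) (A2 : automaton E Q2) (Phi : Q1 -> Q2 -> Prop) : Prop :=
  forall q p, Phi q p -> forall s, Sig s -> forall q', trans A1 q s q' ->
  exists p', trans A2 p s p' /\ Phi q' p'.

Definition backward_cond (Sr : pred E) (Q1 Q2 : Type)
  (A1 : automaton E Q1) (A2 : automaton E Q2) (Phi : Q1 -> Q2 -> Prop) : Prop :=
  forall q p, Phi q p -> forall s, Sr s -> forall p', trans A2 p s p' ->
  exists q', trans A1 q s q' /\ Phi q' p'.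

Definition cc_simulation (Sr : pred E) (Q1 Q2 : Type)
  (A1 : automaton E Q1) (A2 : automaton E Q2) (Phi : Q1 -> Q2 -> Prop) : Prop :=
  init_cond A1 A2 Phi /\ forward_cond predT A1 A2 Phi /\ backward_cond Sr A1 A2 Phi.

Definition ucr_simulation (uc Sr : pred E) (Q1 Q2 : Type)
  (A1 : automaton E Q1) (A2 : automaton E Q2) (Phi : Q1 -> Q2 -> Prop) : Prop :=
  init_cond A1 A2 Phi /\ forward_cond uc A1 A2 Phi /\ backward_cond Sr A1 A2 Phi.

Definition cc_sim_le (Sr : pred E) (Q1 Q2 : Type)
  (A1 : automaton E Q1) (A2 : automaton E Q2) : Prop :=
  exists Phi, cc_simulation Sr A1 A2 Phi.

Definition ucr_sim_le (uc Sr : pred E) (Q1 Q2 : Type)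
  (A1 : automaton E Q1) (A2 : automaton E Q2) : Prop :=
  exists Phi, ucr_simulation uc Sr A1 A2 Phi.

End Defs.

(* Main.v *)
Require Import Defs.
From mathcomp Require Import all_boot.

Lemma trans_str_snoc (E : finType) (Q : Type) (A : automaton E Q) q0 w q s q' :
  trans_str A q0 w q -> trans A q s q' -> trans_str A q0 (rcons w s) q'.
Proof.
elim=> [p|p s0 p1 w0 p2 H1 H2 IH] Ht /=.
- by apply: trans_str_cons Ht (trans_str_nil _ _).
- by apply: trans_str_cons H1 (IH Ht).
Qed.

Lemma reach_step (E : finType) (Q : Type) (A : automaton E Q) q s q' :
  reachable A q -> trans A q s q' -> reachable A q'.
Proof.
case=> q0 [w [Hi Hw]] Ht; exists q0, (rcons w s); split => //.
exact: trans_str_snoc Hw Ht.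
Qed.

Lemma reach_init (E : finType) (Q : Type) (A : automaton E Q) q :
  init A q -> reachable A q.
Proof. by move=> H; exists q, [::]; split => //; constructor. Qed.

Lemma reach_inv (E : finType) (Q : Type) (A : automaton E Q) (Inv : Q -> Prop) :
  (forall q, init A q -> Inv q) ->
  (forall q s q', Inv q -> trans A q s q' -> Inv q') ->
  forall q, reachable A q -> Inv q.
Proof.
move=> Hi Hs q [q0 [w [H0 Hw]]].
have : Inv q0 by apply: Hi.
elim: Hw {H0} => // p s p1 w0 p2 H1 H2 IH Hp.
apply: IH; exact: Hs Hp H1.
Qed.

Theorem corollary1 (E : finType) (uc Sr : pred E)
  (X Z : Type) (G : automaton E X) (R : automaton E Z) :
  deterministic G -> deterministic R ->
  ((exists (Y : Type) (S : automaton E Y),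
      admissible uc S G /\ cc_sim_le Sr (sync S G) R)
   <-> ucr_sim_le uc Sr G R).
Proof.
move=> [[xg0 [Hxg0 HGi]] HGd] [[zr0 [Hzr0 HRi]] HRd]; split.
- move=> [Y [S [Had [Psi [Pi [Pf Pb]]]]]].
  exists (fun x z => exists y, reachable (sync S G) (y, x) /\ Psi (y, x) z).
  split; [|split].
  + move=> x Hx; case: (init_nonempty S) => y Hy.
    have Hin : init (sync S G) (y, x) by split.
    case: (Pi _ Hin) => p0 [Hp0 HP]; exists p0; split => //.
    by exists y; split => //; apply: reach_init.
  + move=> x z [y [Hr HP]] s Hs x' Hx'.
    case: (Had y x Hr s Hs (ex_intro _ x' Hx')) => p' Ht.
    have Ex : p'.2 = x' by apply: HGd (proj2 Ht) Hx'.
    case: (Pf _ _ HP s isT p' Ht) => z' [Hz' HP'].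
    exists z'; split => //; exists p'.1.
    rewrite -Ex -surjective_pairing; split => //.
    exact: reach_step Hr Ht.
  + move=> x z [y [Hr HP]] s Hs z' Hz'.
    case: (Pb _ _ HP s Hs z' Hz') => q' [Ht HP'].
    exists q'.2; split; first exact: (proj2 Ht).
    exists q'.1; rewrite -surjective_pairing; split => //.
    exact: reach_step Hr Ht.
- move=> [Phi [Pi [Pf Pb]]].
  have Hne : exists p : Z * X, (init R p.1 /\ init G p.2 /\ Phi p.2 p.1).
    case: (Pi _ Hxg0) => z [Hz HP]; by exists (z, xg0).
  pose S := @Automaton E (Z * X)
    (fun p s p' => trans R p.1 s p'.1 /\ trans G p.2 s p'.2 /\ Phi p'.2 p'.1)
    (fun p => init R p.1 /\ init G p.2 /\ Phi p.2 p.1) Hne.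
  have Inv : forall q, reachable (sync S G) q -> q.2 = q.1.2 /\ Phi q.1.2 q.1.1.
    apply: reach_inv.
    + move=> [[z x] x''] [[Hz [Hx HP]] Hx''] /=; split => //.
      by move: (HGi _ Hx) (HGi _ Hx'') => /= -> ->.
    + move=> [[z x] x''] s [[z' x'] x'''] /= [E1 HP] [[Hz [Hx HP']] Hx''] /=.
      split => //; rewrite /= in Hz Hx HP' Hx''.
      by subst; apply: HGd Hx'' Hx.
  exists (Z * X)%type, S; split.
  + move=> [z x] x'' Hr s Hs [x' Hx'].
    case: (Inv _ Hr) => /= E1 HP; subst x''.
    case: (Pf _ _ HP s Hs x' Hx') => z' [Hz' HP'].
    by exists ((z', x'), x'); split => //.
  + exists (fun q z'' => z'' = q.1.1 /\ q.2 = q.1.2 /\ Phi q.1.2 q.1.1).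
    split; [|split].
    * move=> [[z x] x''] [[Hz [Hx HP]] Hx''] /=.
      exists z; split => //; split => //; split => //.
      by move: (HGi _ Hx) (HGi _ Hx'') => /= -> ->.
    * move=> [[z x] x''] z'' /= [E1 [E2 HP]] s _ [[z' x'] x'''] [[Hz [Hx HP']] Hx'''].
      rewrite /= in Hz Hx HP' Hx'''; subst.
      exists z'; split => //; split => //; split => //.
      exact: HGd Hx''' Hx.
    * move=> [[z x] x''] z'' /= [E1 [E2 HP]] s Hs p' Hp'; subst.
      case: (Pb _ _ HP s Hs p' Hp') => x' [Hx' HP'].
      by exists ((p', x'), x').
Qed.
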